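(* Let $q\ge1$, $u,v\in\{1,\dots,q\}$, $p_1,p_2\in[0,1]$, and let $X_1\sim\mathrm{Binomial}(u,p_1)$ and $X_2\sim\mathrm{Binomial}(v,p_2)$ be independent. Let $p^*=\min\{\max\{p_1,1-p_1\},\max\{p_2,1-p_2\}\}$. Then $\Pr[X_1\neq X_2]\ge1-\sqrt{p^*}$.
   Context: $\mathrm{Binomial}(n,p)$ is the sum of $n$ i.i.d. $\{0,1\}$-valued random variables each with mean $p$. *)

(* Defs.v *)
From mathcomp Require Import all_boot all_order all_algebra.
Set Implicit Arguments. Unset Strict Implicit. Unset Printing Implicit Defensive.
Import Order.TTheory GRing.Theory Num.Theory.
Local Open Scope ring_scope.

Definition binom_pmf (R : numDomainType) (n : nat) (p : R) (k : nat) : R :=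
  ('C(n, k))%:R * p ^+ k * (1 - p) ^+ (n - k).

Definition prob_binom_neq (R : numDomainType) (u v : nat) (p1 p2 : R) : R :=
  \sum_(i < u.+1) \sum_(j < v.+1)
     (if (i : nat) != (j : nat) then binom_pmf u p1 i * binom_pmf v p2 j else 0).

(* Main.v *)
Require Import Defs.
From mathcomp Require Import all_boot all_order all_algebra.
From mathcomp Require Import ring lra.
Import Order.TTheory GRing.Theory Num.Theory.
Local Open Scope ring_scope.

Section H.
Variable R : realFieldType.

Lemma pmf_ge0 n (p : R) k : 0 <= p <= 1 -> 0 <= binom_pmf n p k.
Proof.
move=> /andP[h0 h1]; rewrite /binom_pmf.
by rewrite !mulr_ge0 ?exprn_ge0 ?ler0n // subr_ge0.
Qed.

Lemma pmf_big n (p : R) k : (n < k)%N -> binom_pmf n p k = 0.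
Proof. by move=> h; rewrite /binom_pmf bin_small // mul0r mul0r. Qed.

Lemma pmf_sum n (p : R) : \sum_(i < n.+1) binom_pmf n p i = 1.
Proof.
have := exprDn (1 - p) p n; rewrite subrK expr1n => E.
rewrite E; apply: eq_bigr => i _; rewrite /binom_pmf -[RHS]mulr_natl; ring.
Qed.

Lemma pmf_partial n (p : R) N : 0 <= p <= 1 ->
  \sum_(0 <= i < N) binom_pmf n p i <= 1.
Proof.
move=> hp.
have -> : 1 = \sum_(0 <= i < N + n.+1) binom_pmf n p i.
  rewrite (big_cat_nat _ (n:=n.+1)) //= ?leq_addl // big_mkord pmf_sum.
  rewrite big_nat_cond big1 ?addr0 // => i /andP[/andP[hi _] _].
  exact: pmf_big.
rewrite [X in _ <= X](big_cat_nat _ (n:=N)) //= ?leq_addr //.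
rewrite lerDl; apply: sumr_ge0 => i _; exact: pmf_ge0.
Qed.

Lemma pmf_S0 n (p : R) : binom_pmf n.+1 p 0 = (1 - p) * binom_pmf n p 0.
Proof. by rewrite /binom_pmf !bin0 !subn0 exprS; ring. Qed.

Lemma pmf_SS n (p : R) k : binom_pmf n.+1 p k.+1 =
  p * binom_pmf n p k + (1 - p) * binom_pmf n p k.+1.
Proof.
rewrite /binom_pmf binS natrD subSS.
case: (ltnP k n) => h.
  have -> : (n - k = (n - k.+1).+1)%N by rewrite subnSK.
  rewrite !exprS; ring.
rewrite (bin_small (n:=n) (m:=k.+1)) ?ltnS // exprS; ring.
Qed.

Lemma pmf_le_max n (p : R) k : 0 <= p <= 1 ->
  binom_pmf n.+1 p k <= Num.max p (1 - p).
Proof.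
move=> hp; have /andP[h0 h1] := hp.
have M1 : p <= Num.max p (1 - p) by rewrite le_max lexx.
have M2 : 1 - p <= Num.max p (1 - p) by rewrite le_max lexx orbT.
case: k => [|k].
  rewrite pmf_S0.
  have a0 := pmf_ge0 n p 0 hp.
  have a1 : binom_pmf n p 0 <= 1.
    by have := pmf_partial n p 1 hp; rewrite big_nat1.
  nra.
rewrite pmf_SS.
have a0 := pmf_ge0 n p k hp; have b0 := pmf_ge0 n p k.+1 hp.
have ab : binom_pmf n p k + binom_pmf n p k.+1 <= 1.
  have := pmf_partial n p k.+2 hp.
  rewrite big_nat_recr //= big_nat_recr //= -addrA => H.
  apply: le_trans H; rewrite lerDr; apply: sumr_ge0 => i _; exact: pmf_ge0.
nra.
Qed.

End H.

Lemma sum_if (R : realFieldType) (i m : nat) (c : R) :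
  \sum_(j < m) (if i == (j : nat) then c else 0) = if (i < m)%N then c else 0.
Proof.
elim: m => [|m IH]; first by rewrite big_ord0.
rewrite big_ord_recr /= IH ltnS.
case: (ltngtP i m) => h; rewrite ?addr0 ?add0r //.
Qed.

Theorem lemma15 (R : rcfType) (q u v : nat) (p1 p2 : R) :
  (1 <= q)%N ->
  (1 <= u <= q)%N -> (1 <= v <= q)%N ->
  0 <= p1 <= 1 -> 0 <= p2 <= 1 ->
  let pstar := Num.min (Num.max p1 (1 - p1)) (Num.max p2 (1 - p2)) in
  1 - Num.sqrt pstar <= prob_binom_neq u v p1 p2.
Proof.
move=> _ /andP[u1 _] /andP[v1 _] hp1 hp2 /=.
set pstar := Num.min _ _.
case: u u1 => // u _; case: v v1 => // v _.
set a := binom_pmf u.+1 p1; set b := binom_pmf v.+1 p2.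
set D := \sum_(i < u.+2) a i * b i.
have E : prob_binom_neq u.+1 v.+1 p1 p2 = 1 - D.
  rewrite /prob_binom_neq.
  transitivity (\sum_(i < u.+2) (a i - a i * b i)).
    apply: eq_bigr => i _.
    transitivity (\sum_(j < v.+2) (a i * b j - (if (i:nat) == j then a i * b i else 0))).
      apply: eq_bigr => j _; case: (eqVneq (i:nat) j) => [->|ne] /=.
        by rewrite subrr.
      by rewrite oppr0 addr0.
    rewrite sumrB -mulr_sumr pmf_sum mulr1 sum_if.
    case: (ltnP i v.+2) => h //.
    by rewrite /b pmf_big // mulr0 subr0.
  by rewrite sumrB pmf_sum.
have D1 : D <= Num.max p1 (1 - p1).
  apply: (@le_trans _ _ (\sum_(i < u.+2) Num.max p1 (1 - p1) * b i)).
    apply: ler_sum => i _; apply: ler_wpM2r; first exact: pmf_ge0.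
    exact: pmf_le_max.
  rewrite -mulr_sumr -[X in _ <= X]mulr1 ler_wpM2l //.
    by rewrite le_max; case/andP: hp1 => h _; rewrite h.
  by rewrite -(big_mkord xpredT b); apply: pmf_partial.
have D2 : D <= Num.max p2 (1 - p2).
  apply: (@le_trans _ _ (\sum_(i < u.+2) a i * Num.max p2 (1 - p2))).
    apply: ler_sum => i _; apply: ler_wpM2l; first exact: pmf_ge0.
    exact: pmf_le_max.
  by rewrite -mulr_suml pmf_sum mul1r.
have Dp : D <= pstar by rewrite /pstar le_min D1 D2.
have p0 : 0 <= pstar.
  rewrite /pstar le_min !le_max.
  by case/andP: hp1 => -> _; case/andP: hp2 => -> _.
have pl1 : pstar <= 1.
  rewrite /pstar ge_min; apply/orP; left.
  by case/andP: hp1 => h0 h1; rewrite ge_max h1 lerBlDr lerDl h0.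
have s0 := sqrtr_ge0 pstar.
have s2 := sqr_sqrtr p0.
rewrite E.
set s := Num.sqrt pstar in s0 s2 *.
rewrite expr2 in s2.
nra.
Qed.
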